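(* Let $\lambda,n_c,g_+,g_->0$ with $n_c<1$, let $c_B>\bar c>0$, and let $$\psi(n)=\begin{cases}\lambda,& n=1,\\ \lambda n_c,& 0<n<1,\\ 0,& n=0,\end{cases}\qquad G(c)=\begin{cases} g_+,& c>\bar c,\\ -g_-,& c<\bar c.\end{cases}$$ Set $\alpha=\sqrt{g_-/(g_++g_-)}\in(0,1)$ and $$\mathcal F(R)=\frac{\bar c}{c_B}\Big(\cosh(\sqrt\lambda R)+\sqrt{n_c}\sinh(\sqrt\lambda R)\Big)-\sqrt{n_c}\sinh\big(\sqrt\lambda(1-\alpha)R\big)-\cosh\big(\sqrt\lambda(1-\alpha)R\big).$$ Then $\mathcal F$ has a unique positive root $R$, and there is a unique monotone traveling wave: a unique pair $\sigma>0$, $R>0$ such that the system (TW-vitro) below admits a nonnegative solution with $c'\ge0$. This $R$ is the unique positive root of $\mathcal F$, and $$\sigma=R\big(\sqrt{(g_++g_-)g_-}-g_-\big).$$ Moreover $\sigma$ increases with respect to $c_B$ and decreases with respect to $\bar c$.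
   Context: System (TW-vitro), with unknowns $\sigma>0$, $R>0$ and functions $n,c,p$ on $\mathbb{R}$: (i) $-\sigma n'=nG(c)$ on $(-\infty,0]$; (ii) $n=1$ on $[0,R]$ and $n=0$ on $(R,+\infty)$; (iii) $c$ is $C^1$ on $(-\infty,R]$ and satisfies $c''=\psi(n)c$ on $(-\infty,R]$, with $c(R)=c_B$ (and $c=c_B$ on $(R,+\infty)$); (iv) $-p''=G(c)$ on $[0,R]$, $p(0)=p(R)=0$, $p\ge 0$, and $p=0$ outside $[0,R]$; (v) jump relations: $\sigma=-p'(R^-)$, $n(0)=1$, $p'(0^+)=0$. The solution $c$ is required to be bounded on $(-\infty,0]$. *)

(* Defs.v *)
From Stdlib Require Export Reals Lra List.
Export ListNotations.
Open Scope R_scope.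

(* psi(n) = lam if n = 1, lam*nc if 0 < n < 1, 0 if n = 0.
   Outside [0,1] psi is undefined in the paper; we return 0 there, but
   solutions are required to satisfy 0 <= n <= 1, so this value is never used. *)
Definition psi (lam nc n : R) : R :=
  if Req_EM_T n 1 then lam
  else if Rlt_dec 0 n then (if Rlt_dec n 1 then lam * nc else 0) else 0.

(* G(cbar) is undefined in the paper;
   we return 0 there (the equations involving G are only required off a finite
   exceptional set, see monotone_TW_solution). *)
Definition G (gp gm cbar c : R) : R :=
  if Rlt_dec cbar c then gp else if Rlt_dec c cbar then - gm else 0.

Definition alpha (gp gm : R) : R := sqrt (gm / (gp + gm)).

Definition F (lam nc gp gm cbar cB Rr : R) : R :=
  cbar / cB * (cosh (sqrt lam * Rr) + sqrt nc * sinh (sqrt lam * Rr))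
  - sqrt nc * sinh (sqrt lam * (1 - alpha gp gm) * Rr)
  - cosh (sqrt lam * (1 - alpha gp gm) * Rr).

(* (n, c, p) is a nonnegative solution of (TW-vitro) with unknowns sigma, Rr,
   with c' >= 0.  Second-order equations (and the first-order equation for n)
   are understood piecewise: the functions are C^0 / C^1 as stated, and the
   differential equation holds at every point off a finite exceptional set D
   (needed since G(c) and psi(n) are discontinuous). *)
Definition monotone_TW_solution (lam nc gp gm cbar cB sigma Rr : R)
    (n c p : R -> R) : Prop :=
  exists (D : list R) (dc dp : R -> R),
    (forall x, 0 <= n x <= 1) /\ (forall x, 0 <= c x) /\ (forall x, 0 <= p x) /\
    (* (i)  -sigma n' = n G(c) on (-oo,0] *)
    (forall x, x <= 0 -> continuity_pt n x) /\
    (forall x, x < 0 -> ~ In x D ->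
        derivable_pt_lim n x (- (n x * G gp gm cbar (c x)) / sigma)) /\
    (forall x, 0 <= x <= Rr -> n x = 1) /\
    (forall x, Rr < x -> n x = 0) /\
    (forall x, x <= Rr -> continuity_pt c x) /\
    (forall x, x < Rr -> derivable_pt_lim c x (dc x)) /\
    (forall x, x < Rr -> continuity_pt dc x) /\
    (exists l, limit1_in dc (fun x => x < Rr) l Rr) /\
    (forall x, x < Rr -> ~ In x D ->
        derivable_pt_lim dc x (psi lam nc (n x) * c x)) /\
    c Rr = cB /\ (forall x, Rr < x -> c x = cB) /\
    (exists M, forall x, x <= 0 -> Rabs (c x) <= M) /\
    (forall x, x < Rr -> 0 <= dc x) /\
    (forall x, 0 <= x <= Rr -> continuity_pt p x) /\
    (forall x, 0 < x < Rr -> derivable_pt_lim p x (dp x)) /\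
    (forall x, 0 < x < Rr -> continuity_pt dp x) /\
    (forall x, 0 < x < Rr -> ~ In x D ->
        derivable_pt_lim dp x (- G gp gm cbar (c x))) /\
    p 0 = 0 /\ p Rr = 0 /\
    (forall x, x < 0 \/ Rr < x -> p x = 0) /\
    (* (v) jump relations: sigma = -p'(Rr^-), n(0) = 1, p'(0^+) = 0 *)
    limit1_in dp (fun x => 0 < x < Rr) (- sigma) Rr /\
    n 0 = 1 /\
    limit1_in dp (fun x => 0 < x < Rr) 0 0.

Definition admits_monotone_TW (lam nc gp gm cbar cB sigma Rr : R) : Prop :=
  exists n c p : R -> R, monotone_TW_solution lam nc gp gm cbar cB sigma Rr n c p.

(* Main.v *)
Require Import Defs.
From Stdlib Require Import Reals Lra List.
From Coquelicot Require Import Coquelicot.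
Require Import Defs.
Open Scope R_scope.

Lemma cont_lim f Dom x0 : continuity_pt f x0 -> limit1_in f Dom (f x0) x0.
Proof.
  intros H eps Heps. destruct (H eps Heps) as [alp [Ha Hb]].
  exists alp; split; auto. intros x [Hx1 Hx2].
  destruct (Req_dec x x0) as [->|Hne].
  - simpl; unfold R_dist. rewrite Rminus_diag, Rabs_R0; lra.
  - apply Hb. split; auto. split; [exact I| auto].
Qed.

Lemma lim_right f Dom L x0 h d :
  limit1_in f Dom L x0 -> 0 < d ->
  (forall z, x0 < z < x0 + d -> Dom z /\ f z = h z) ->
  continuity_pt h x0 -> L = h x0.
Proof.
  intros Hl Hd Hz Hh.
  destruct (Req_dec L (h x0)) as [E|Hne]; auto. exfalso.
  set (e := Rabs (L - h x0)).
  assert (He : 0 < e) by (apply Rabs_pos_lt; intro; apply Hne; lra).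
  destruct (Hl (e/2) ltac:(lra)) as [a1 [Ha1 H1]].
  destruct (Hh (e/2) ltac:(lra)) as [a2 [Ha2 H2]].
  set (m := Rmin d (Rmin a1 a2)).
  assert (Hm : 0 < m) by (unfold m; repeat apply Rmin_pos; lra).
  assert (Hm1 : m <= d) by (unfold m; apply Rmin_l).
  assert (Hm2 : m <= a1) by (unfold m; eapply Rle_trans; [apply Rmin_r|apply Rmin_l]).
  assert (Hm3 : m <= a2) by (unfold m; eapply Rle_trans; [apply Rmin_r|apply Rmin_r]).
  set (z := x0 + m/2).
  destruct (Hz z ltac:(unfold z; lra)) as [Dz Ez].
  assert (Hd1 : Rabs (z - x0) < a1) by (unfold z; rewrite Rabs_right; lra).
  assert (Hd2 : Rabs (z - x0) < a2) by (unfold z; rewrite Rabs_right; lra).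
  specialize (H1 z (conj Dz Hd1)). simpl in H1; unfold R_dist in H1.
  assert (Q : D_x no_cond x0 z /\ R_dist z x0 < a2).
  { split; [split; [exact I| unfold z; lra]| exact Hd2]. }
  specialize (H2 z Q). simpl in H2; unfold R_dist in H2.
  rewrite Ez in H1.
  assert (Rabs (L - h x0) <= Rabs (h z - L) + Rabs (h z - h x0)).
  { replace (L - h x0) with (-(h z - L) + (h z - h x0)) by ring.
    eapply Rle_trans; [apply Rabs_triang|]. rewrite Rabs_Ropp. lra. }
  fold e in H. lra.
Qed.

Lemma lim_left f Dom L x0 h d :
  limit1_in f Dom L x0 -> 0 < d ->
  (forall z, x0 - d < z < x0 -> Dom z /\ f z = h z) ->
  continuity_pt h x0 -> L = h x0.
Proof.
  intros Hl Hd Hz Hh.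
  destruct (Req_dec L (h x0)) as [E|Hne]; auto. exfalso.
  set (e := Rabs (L - h x0)).
  assert (He : 0 < e) by (apply Rabs_pos_lt; intro; apply Hne; lra).
  destruct (Hl (e/2) ltac:(lra)) as [a1 [Ha1 H1]].
  destruct (Hh (e/2) ltac:(lra)) as [a2 [Ha2 H2]].
  set (m := Rmin d (Rmin a1 a2)).
  assert (Hm : 0 < m) by (unfold m; repeat apply Rmin_pos; lra).
  assert (Hm1 : m <= d) by (unfold m; apply Rmin_l).
  assert (Hm2 : m <= a1) by (unfold m; eapply Rle_trans; [apply Rmin_r|apply Rmin_l]).
  assert (Hm3 : m <= a2) by (unfold m; eapply Rle_trans; [apply Rmin_r|apply Rmin_r]).
  set (z := x0 - m/2).
  destruct (Hz z ltac:(unfold z; lra)) as [Dz Ez].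
  assert (Hd1 : Rabs (z - x0) < a1) by (unfold z; rewrite Rabs_left; lra).
  assert (Hd2 : Rabs (z - x0) < a2) by (unfold z; rewrite Rabs_left; lra).
  specialize (H1 z (conj Dz Hd1)). simpl in H1; unfold R_dist in H1.
  assert (Q : D_x no_cond x0 z /\ R_dist z x0 < a2).
  { split; [split; [exact I| unfold z; lra]| exact Hd2]. }
  specialize (H2 z Q). simpl in H2; unfold R_dist in H2.
  rewrite Ez in H1.
  assert (Rabs (L - h x0) <= Rabs (h z - L) + Rabs (h z - h x0)).
  { replace (L - h x0) with (-(h z - L) + (h z - h x0)) by ring.
    eapply Rle_trans; [apply Rabs_triang|]. rewrite Rabs_Ropp. lra. }
  fold e in H. lra.
Qed.

Lemma cont_left_eq f h x0 d : continuity_pt f x0 -> continuity_pt h x0 -> 0 < d ->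
  (forall z, x0 - d < z < x0 -> f z = h z) -> f x0 = h x0.
Proof.
  intros Hf Hh Hd Hz. apply (lim_left f (fun z => z < x0) (f x0) x0 h d); auto.
  apply cont_lim; auto. intros z Hz'; split; [lra| auto].
Qed.

Lemma junction_cont f g1 g2 x0 d : 0 < d ->
  (forall z, x0 - d < z <= x0 -> f z = g1 z) -> (forall z, x0 <= z < x0 + d -> f z = g2 z) ->
  continuity_pt g1 x0 -> continuity_pt g2 x0 -> continuity_pt f x0.
Proof.
  intros Hd H1 H2 C1 C2 eps Heps.
  destruct (C1 eps Heps) as [a1 [Ha1 K1]]. destruct (C2 eps Heps) as [a2 [Ha2 K2]].
  exists (Rmin d (Rmin a1 a2)); split.
  { repeat apply Rmin_pos; lra. }
  intros x [[_ Hx] Hdx]. simpl in *; unfold R_dist in *.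
  assert (Hm1 : Rmin d (Rmin a1 a2) <= d) by apply Rmin_l.
  assert (Hm2 : Rmin d (Rmin a1 a2) <= a1) by (eapply Rle_trans; [apply Rmin_r|apply Rmin_l]).
  assert (Hm3 : Rmin d (Rmin a1 a2) <= a2) by (eapply Rle_trans; [apply Rmin_r|apply Rmin_r]).
  assert (Hx1 : x0 - d < x < x0 + d).
  { destruct (Rcase_abs (x - x0)) as [Hn|Hp];
    [rewrite Rabs_left in Hdx by lra | rewrite Rabs_right in Hdx by lra]; lra. }
  destruct (Rle_dec x x0) as [Hle|Hgt].
  - rewrite (H1 x) by lra. rewrite (H1 x0) by lra.
    apply K1. split; [split; [exact I|auto]|]. simpl; unfold R_dist; lra.
  - rewrite (H2 x) by lra. rewrite (H2 x0) by lra.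
    apply K2. split; [split; [exact I|auto]|]. simpl; unfold R_dist; lra.
Qed.

Lemma junction_der f g1 g2 x0 d l : 0 < d ->
  (forall z, x0 - d < z <= x0 -> f z = g1 z) -> (forall z, x0 <= z < x0 + d -> f z = g2 z) ->
  derivable_pt_lim g1 x0 l -> derivable_pt_lim g2 x0 l -> derivable_pt_lim f x0 l.
Proof.
  intros Hd H1 H2 C1 C2 eps Heps.
  destruct (C1 eps Heps) as [a1 K1]. destruct (C2 eps Heps) as [a2 K2].
  assert (P : 0 < Rmin d (Rmin a1 a2)).
  { destruct a1, a2; simpl; repeat apply Rmin_pos; lra. }
  exists (mkposreal _ P). intros h Hh Hha. simpl in Hha.
  assert (Hm1 : Rmin d (Rmin a1 a2) <= d) by apply Rmin_l.
  assert (Hm2 : Rmin d (Rmin a1 a2) <= a1) by (eapply Rle_trans; [apply Rmin_r|apply Rmin_l]).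
  assert (Hm3 : Rmin d (Rmin a1 a2) <= a2) by (eapply Rle_trans; [apply Rmin_r|apply Rmin_r]).
  assert (Hx1 : - d < h < d).
  { destruct (Rcase_abs h) as [Hn|Hp];
    [rewrite Rabs_left in Hha by lra | rewrite Rabs_right in Hha by lra]; lra. }
  destruct (Rle_dec h 0) as [Hle|Hgt].
  - rewrite (H1 (x0+h)) by lra. rewrite (H1 x0) by lra. apply K1; auto; lra.
  - rewrite (H2 (x0+h)) by lra. rewrite (H2 x0) by lra. apply K2; auto; lra.
Qed.

Lemma local_der f g x0 d l : 0 < d -> (forall z, x0 - d < z < x0 + d -> f z = g z) ->
  derivable_pt_lim g x0 l -> derivable_pt_lim f x0 l.
Proof.
  intros Hd H Hg. apply (junction_der f g g x0 d l); auto; intros; apply H; lra.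
Qed.

Lemma local_cont f g x0 d : 0 < d -> (forall z, x0 - d < z < x0 + d -> f z = g z) ->
  continuity_pt g x0 -> continuity_pt f x0.
Proof.
  intros Hd H Hg. apply (junction_cont f g g x0 d); auto; intros; apply H; lra.
Qed.

Lemma der_cont f x l : derivable_pt_lim f x l -> continuity_pt f x.
Proof. intros H. apply derivable_continuous_pt. exists l. exact H. Qed.

Lemma exists_not_in : forall D a b, a < b -> exists y, a < y < b /\ ~ In y D.
Proof.
  induction D as [|d D IH]; intros a b Hab.
  - exists ((a+b)/2). split; [lra| simpl; auto].
  - destruct (Rle_dec d a) as [H1|H1].
    + destruct (IH a b Hab) as [y [Hy Ny]]. exists y; split; auto.
      simpl; intros [E|E]; [lra| auto].
    + destruct (Rle_dec b d) as [H2|H2].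
      * destruct (IH a b Hab) as [y [Hy Ny]]. exists y; split; auto.
        simpl; intros [E|E]; [lra| auto].
      * destruct (IH a d ltac:(lra)) as [y [Hy Ny]]. exists y; split; [lra|].
        simpl; intros [E|E]; [lra| auto].
Qed.

Lemma mono_nil a b f df : a <= b -> (forall x, a <= x <= b -> continuity_pt f x) ->
  (forall x, a < x < b -> derivable_pt_lim f x (df x) /\ 0 <= df x) -> f a <= f b.
Proof.
  intros Hab Hc Hd.
  destruct (Req_dec a b) as [->|Hne]; [lra|].
  set (df' := fun x => if Rlt_dec a x then if Rlt_dec x b then df x else 0 else 0).
  destruct (MVT_gen f a b df') as [c [Hc1 Hc2]].
  - rewrite Rmin_left, Rmax_right by lra. intros x Hx. apply is_derive_Reals.
    unfold df'. destruct (Rlt_dec a x); [|lra]. destruct (Rlt_dec x b); [|lra].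
    apply Hd; auto.
  - rewrite Rmin_left, Rmax_right by lra. auto.
  - assert (0 <= df' c).
    { unfold df'. destruct (Rlt_dec a c); [|lra]. destruct (Rlt_dec c b); [|lra].
      apply Hd; lra. }
    assert (0 <= df' c * (b - a)) by (apply Rmult_le_pos; lra). lra.
Qed.

Lemma mono_exc : forall D a b f df, a <= b -> (forall x, a <= x <= b -> continuity_pt f x) ->
  (forall x, a < x < b -> ~ In x D -> derivable_pt_lim f x (df x) /\ 0 <= df x) -> f a <= f b.
Proof.
  induction D as [|d D IH]; intros a b f df Hab Hc Hd.
  - apply (mono_nil a b f df); [exact Hab| exact Hc|]. intros x Hx; apply Hd; auto.
  - assert (Hd' : forall x, a < x < b -> x <> d -> ~ In x D ->
                  derivable_pt_lim f x (df x) /\ 0 <= df x).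
    { intros x Hx Hxd Hn. apply Hd; auto. simpl; intros [E|E]; [congruence| auto]. }
    destruct (Rlt_dec a d) as [H1|H1]; [destruct (Rlt_dec d b) as [H2|H2]|].
    + apply Rle_trans with (f d).
      * apply (IH a d f df); [lra| intros; apply Hc; lra|].
        intros x Hx Hn; apply Hd'; auto; lra.
      * apply (IH d b f df); [lra| intros; apply Hc; lra|].
        intros x Hx Hn; apply Hd'; auto; lra.
    + apply (IH a b f df); auto. intros x Hx Hn; apply Hd'; auto; lra.
    + apply (IH a b f df); auto. intros x Hx Hn; apply Hd'; auto; lra.
Qed.

Lemma const_exc D a b f : a <= b -> (forall x, a <= x <= b -> continuity_pt f x) ->
  (forall x, a < x < b -> ~ In x D -> derivable_pt_lim f x 0) -> f a = f b.
Proof.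
  intros Hab Hc Hd. apply Rle_antisym.
  - apply (mono_exc D a b f (fun _ => 0)); auto. intros x Hx Hn; split; [apply Hd; auto| lra].
  - assert (- f a <= - f b); [|lra].
    apply (mono_exc D a b (fun x => - f x) (fun _ => 0)); auto.
    + intros x Hx. apply continuity_pt_opp. auto.
    + intros x Hx Hn; split; [|lra]. replace 0 with (- 0) by ring.
      apply derivable_pt_lim_opp. apply Hd; auto.
Qed.

Lemma der_exp_lin c x : derivable_pt_lim (fun x => exp (c*x)) x (c*exp(c*x)).
Proof. apply is_derive_Reals. auto_derive; auto. ring. Qed.

Lemma ode_exc D a b f k : a <= b -> (forall x, a <= x <= b -> continuity_pt f x) ->
  (forall x, a < x < b -> ~ In x D -> derivable_pt_lim f x (k * f x)) ->
  f a * exp (- k * a) = f b * exp (- k * b).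
Proof.
  intros Hab Hc Hd.
  apply (const_exc D a b (fun x => f x * exp (-k * x))); auto.
  - intros x Hx. apply continuity_pt_mult; auto. eapply der_cont. apply der_exp_lin.
  - intros x Hx Hn.
    replace 0 with (k * f x * exp (-k*x) + f x * (-k * exp (-k * x))) by ring.
    apply (derivable_pt_lim_mult f (fun x => exp (-k*x))); auto. apply der_exp_lin.
Qed.

Lemma const_der_zero g a b x C : (forall z, a < z < b -> g z = C) -> a < x < b ->
  derivable_pt_lim g x 0.
Proof.
  intros H Hx. apply (local_der g (fun _ => C) x (Rmin (x - a) (b - x))).
  - apply Rmin_pos; lra.
  - intros z Hz. apply H.
    assert (Rmin (x-a) (b-x) <= x - a) by apply Rmin_l.
    assert (Rmin (x-a) (b-x) <= b - x) by apply Rmin_r. lra.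
  - apply derivable_pt_lim_const.
Qed.

Lemma exp_neg x : exp (- x) = / exp x.
Proof. apply exp_Ropp. Qed.

Lemma exp_le x y : x <= y -> exp x <= exp y.
Proof. intros [H| ->]; [left; apply exp_increasing; auto| lra]. Qed.

Lemma cosh_ge1 y : 1 <= cosh y.
Proof.
  unfold cosh. rewrite exp_neg. pose proof (exp_pos y). set (e := exp y) in *.
  assert (e + / e - 2 = (e - 1)^2 / e) by (field; lra).
  assert (0 <= (e-1)^2 / e) by (apply Rmult_le_pos; [apply pow2_ge_0| left; apply Rinv_0_lt_compat; lra]).
  lra.
Qed.

Lemma sinh_pos y : 0 < y -> 0 < sinh y.
Proof. intros H. rewrite <- sinh_0. apply sinh_lt; auto. Qed.

Lemma sinh_nneg y : 0 <= y -> 0 <= sinh y.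
Proof. intros [H| <-]; [left; apply sinh_pos; auto| rewrite sinh_0; lra]. Qed.

Lemma cosh_le y1 y2 : 0 <= y1 -> y1 <= y2 -> cosh y1 <= cosh y2.
Proof.
  intros H1 H2. unfold cosh. rewrite !exp_neg.
  assert (1 <= exp y1) by (rewrite <- exp_0; apply exp_le; auto).
  assert (exp y1 <= exp y2) by (apply exp_le; auto).
  set (u := exp y1) in *. set (v := exp y2) in *.
  assert (v + / v - (u + / u) = (v - u) * (u*v - 1) / (u*v)) by (field; lra).
  assert (0 <= (v - u) * (u*v - 1) / (u*v)).
  { apply Rmult_le_pos; [apply Rmult_le_pos; nra| left; apply Rinv_0_lt_compat; nra]. }
  lra.
Qed.

Lemma sinh_minus A B : sinh A * cosh B - cosh A * sinh B = sinh (A - B).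
Proof.
  unfold sinh, cosh. unfold Rminus. rewrite exp_plus, Ropp_plus_distr, Ropp_involutive, exp_plus.
  rewrite !exp_neg. pose proof (exp_pos A). pose proof (exp_pos B). field; lra.
Qed.

Definition fk k y := cosh y + k * sinh y.
Definition gk k y := sinh y + k * cosh y.

Lemma fk_ge1 k y : 0 <= k -> 0 <= y -> 1 <= fk k y.
Proof. intros. unfold fk. pose proof (cosh_ge1 y). pose proof (sinh_nneg y H0). nra. Qed.

Lemma fk_pos k y : 0 <= k -> 0 <= y -> 0 < fk k y.
Proof. intros. pose proof (fk_ge1 k y H H0). lra. Qed.

Lemma fk_gt1 k y : 0 <= k -> 0 < y -> 1 < fk k y.
Proof.
  intros. unfold fk. pose proof (cosh_ge1 y). pose proof (sinh_pos y H0).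
  assert (1 < cosh y \/ 0 < k) as [?|?]; [|nra|nra].
  destruct H as [H|H]; [auto|left].
  pose proof (cosh_le (y/2) y ltac:(lra) ltac:(lra)).
  unfold cosh. rewrite exp_neg. pose proof (exp_pos y).
  assert (1 < exp y) by (rewrite <- exp_0; apply exp_increasing; auto).
  set (e := exp y) in *.
  assert (e + / e - 2 = (e - 1)^2 / e) by (field; lra).
  assert (0 < (e-1)^2 / e) by (apply Rmult_lt_0_compat; [apply pow_lt; lra| apply Rinv_0_lt_compat; lra]).
  lra.
Qed.

Lemma fk_lt k y1 y2 : 0 <= k -> 0 <= y1 -> y1 < y2 -> fk k y1 < fk k y2.
Proof.
  intros. unfold fk. pose proof (cosh_le y1 y2 H0 (Rlt_le _ _ H1)).
  pose proof (sinh_lt y1 y2 H1).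
  destruct H as [H|H].
  - nra.
  - subst k.
    unfold cosh. rewrite !exp_neg.
    assert (1 <= exp y1) by (rewrite <- exp_0; apply exp_le; auto).
    assert (exp y1 < exp y2) by (apply exp_increasing; auto).
    set (u := exp y1) in *. set (v := exp y2) in *.
    assert (v + / v - (u + / u) = (v - u) * (u*v - 1) / (u*v)) by (field; lra).
    assert (0 < (v - u) * (u*v - 1) / (u*v)).
    { apply Rmult_lt_0_compat; [apply Rmult_lt_0_compat; nra| apply Rinv_0_lt_compat; nra]. }
    lra.
Qed.

Lemma gk_pos k y : 0 < k -> 0 <= y -> 0 < gk k y.
Proof. intros. unfold gk. pose proof (cosh_ge1 y). pose proof (sinh_nneg y H0). nra. Qed.

Lemma der_fk k a x : derivable_pt_lim (fun x => fk k (a*x)) x (a * gk k (a*x)).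
Proof. apply is_derive_Reals. unfold fk, gk, cosh, sinh. auto_derive; auto. field. Qed.

Lemma der_gk k a x : derivable_pt_lim (fun x => gk k (a*x)) x (a * fk k (a*x)).
Proof. apply is_derive_Reals. unfold fk, gk, cosh, sinh. auto_derive; auto. field. Qed.

Lemma cont_fk k a x : continuity_pt (fun x => fk k (a*x)) x.
Proof. eapply der_cont; apply der_fk. Qed.

Lemma cont_gk k a x : continuity_pt (fun x => gk k (a*x)) x.
Proof. eapply der_cont; apply der_gk. Qed.

Lemma gf_cross k A B : gk k A * fk k B - fk k A * gk k B = (1 - k^2) * sinh (A - B).
Proof. rewrite <- sinh_minus. unfold fk, gk. ring. Qed.

(* ratio monotonicity: for 0 <= R1 < R2, a > b > 0 *)
Lemma H_mono k a b R1 R2 : 0 < k < 1 -> 0 < b < a -> 0 <= R1 < R2 ->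
  fk k (a*R1) * fk k (b*R2) < fk k (a*R2) * fk k (b*R1).
Proof.
  intros Hk Hab HR.
  set (phi := fun t => fk k (a*t) / fk k (b*t)).
  set (dphi := fun t => (a * gk k (a*t) * fk k (b*t) - fk k (a*t) * (b * gk k (b*t))) / (fk k (b*t))^2).
  destruct (MVT_cor2 phi dphi R1 R2) as [c [Hc1 Hc2]]; [lra| |].
  - intros c Hc.
    assert (0 < fk k (b*c)) by (apply fk_pos; nra).
    replace (dphi c) with ((a * gk k (a*c) * fk k (b*c) - b * gk k (b*c) * fk k (a*c)) / Rsqr (fk k (b*c)))
      by (unfold dphi, Rsqr; simpl; field; lra).
    apply (derivable_pt_lim_div (fun t => fk k (a*t)) (fun t => fk k (b*t))); [apply der_fk| apply der_fk| lra].
  - assert (Hc0 : 0 < c) by lra.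
    assert (0 < dphi c).
    { unfold dphi. assert (P: 0 < fk k (b*c)) by (apply fk_pos; nra).
      apply Rmult_lt_0_compat; [| apply Rinv_0_lt_compat; nra].
      assert (E: a * gk k (a*c) * fk k (b*c) - fk k (a*c) * (b * gk k (b*c)) =
        (a - b) * gk k (a*c) * fk k (b*c) + b * ((1 - k^2) * sinh (a*c - b*c)))
        by (rewrite <- gf_cross; ring).
      rewrite E. pose proof (gk_pos k (a*c) ltac:(lra) ltac:(nra)).
      pose proof (sinh_pos (a*c - b*c) ltac:(nra)).
      assert (0 < (a-b) * gk k (a*c) * fk k (b*c)) by (repeat apply Rmult_lt_0_compat; lra).
      assert (0 < 1 - k^2) by (simpl; nra).
      assert (0 < b * ((1 - k^2) * sinh (a*c - b*c))) by (apply Rmult_lt_0_compat; [lra| apply Rmult_lt_0_compat; assumption]).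
      lra. }
    assert (phi R1 < phi R2) by nra.
    unfold phi in H0.
    assert (P1 : 0 < fk k (b*R1)) by (apply fk_pos; nra).
    assert (P2 : 0 < fk k (b*R2)) by (apply fk_pos; nra).
    apply (Rmult_lt_compat_r (fk k (b*R1) * fk k (b*R2))) in H0; [|nra].
    replace (fk k (a * R1) / fk k (b * R1) * (fk k (b * R1) * fk k (b * R2))) with
      (fk k (a*R1) * fk k (b*R2)) in H0 by (field; lra).
    replace (fk k (a * R2) / fk k (b * R2) * (fk k (b * R1) * fk k (b * R2))) with
      (fk k (a*R2) * fk k (b*R1)) in H0 by (field; lra).
    exact H0.
Qed.

Lemma G_gt gp gm cbar x : cbar < x -> G gp gm cbar x = gp.
Proof. intros H. unfold G. destruct (Rlt_dec cbar x); [auto| lra]. Qed.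
Lemma G_lt gp gm cbar x : x < cbar -> G gp gm cbar x = - gm.
Proof. intros H. unfold G. destruct (Rlt_dec cbar x); [lra|]. destruct (Rlt_dec x cbar); [auto|lra]. Qed.
Lemma G_eq gp gm cbar : G gp gm cbar cbar = 0.
Proof. unfold G. destruct (Rlt_dec cbar cbar); [lra|]. destruct (Rlt_dec cbar cbar); [lra|auto]. Qed.
Lemma psi_1 lam nc : psi lam nc 1 = lam.
Proof. unfold psi. destruct (Req_EM_T 1 1); [auto| congruence]. Qed.
Lemma psi_mid lam nc x : 0 < x < 1 -> psi lam nc x = lam * nc.
Proof.
  intros H. unfold psi. destruct (Req_EM_T x 1); [lra|].
  destruct (Rlt_dec 0 x); [|lra]. destruct (Rlt_dec x 1); [auto|lra].
Qed.

Lemma der_eq f x l l' : derivable_pt_lim f x l -> l = l' -> derivable_pt_lim f x l'.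
Proof. intros H <-; exact H. Qed.

Lemma der_lin a b x : derivable_pt_lim (fun t => a * t + b) x a.
Proof. apply is_derive_Reals. auto_derive; auto. ring. Qed.

Lemma der_quad a b c x : derivable_pt_lim (fun t => a * t^2 + b * t + c) x (2*a*x + b).
Proof. apply is_derive_Reals. auto_derive; auto. ring. Qed.

Lemma cont_lin a b x : continuity_pt (fun t => a * t + b) x.
Proof. eapply der_cont; apply der_lin. Qed.
Lemma cont_quad a b c x : continuity_pt (fun t => a * t^2 + b * t + c) x.
Proof. eapply der_cont; apply der_quad. Qed.

Lemma p_analysis gp gm Rr xb p dp D sigma :
  0 < gp -> 0 < gm -> 0 <= xb < Rr ->
  (forall x, 0 <= x <= Rr -> continuity_pt p x) ->
  (forall x, 0 < x < Rr -> derivable_pt_lim p x (dp x)) ->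
  (forall x, 0 < x < Rr -> continuity_pt dp x) ->
  (forall x, 0 < x < xb -> ~ In x D -> derivable_pt_lim dp x gm) ->
  (forall x, xb < x < Rr -> ~ In x D -> derivable_pt_lim dp x (-gp)) ->
  p 0 = 0 -> p Rr = 0 ->
  limit1_in dp (fun x => 0 < x < Rr) (- sigma) Rr ->
  limit1_in dp (fun x => 0 < x < Rr) 0 0 ->
  sigma = gp * (Rr - xb) - gm * xb /\
  gm * xb^2 / 2 + gm * xb * (Rr - xb) - gp * (Rr - xb)^2 / 2 = 0.
Proof.
  intros Hgp Hgm Hxb Hpc Hpd Hdpc Hd1 Hd2 Hp0 HpR Hl1 Hl0.
  assert (A : forall z, 0 < z < xb -> dp z = gm * z).
  { intros z Hz.
    assert (E : forall w, 0 < w <= z -> dp w = gm * w + (dp z - gm * z)).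
    { intros w Hw.
      assert (dp w - gm * w = dp z - gm * z); [|lra].
      apply (const_exc D w z (fun t => dp t - gm * t)); [lra| |].
      - intros x Hx. apply continuity_pt_minus; [apply Hdpc; lra| apply continuity_pt_scal, derivable_continuous_pt, derivable_pt_id].
      - intros x Hx Hn. replace 0 with (gm - gm * 1) by ring.
        apply derivable_pt_lim_minus; [apply Hd1; auto; lra|].
        apply derivable_pt_lim_scal, derivable_pt_lim_id. }
    pose proof (lim_right dp (fun x => 0 < x < Rr) 0 0 (fun w => gm * w + (dp z - gm * z)) z Hl0
      ltac:(lra)) as L.
    assert (0 = gm * 0 + (dp z - gm * z)); [|lra].
    apply L.
    - intros w Hw. split; [lra| apply E; lra].
    - apply cont_lin. }
  assert (B : forall y, xb < y < Rr -> dp y = gm * xb - gp * (y - xb)).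
  { destruct (Req_dec xb 0) as [Hx0|Hx0].
    - subst xb. intros y Hy.
      assert (E : forall w, 0 < w <= y -> dp w = - gp * w + (dp y + gp * y)).
      { intros w Hw.
        assert (dp w + gp * w = dp y + gp * y); [|lra].
        apply (const_exc D w y (fun t => dp t + gp * t)); [lra| |].
        - intros x Hx. apply continuity_pt_plus; [apply Hdpc; lra| apply continuity_pt_scal, derivable_continuous_pt, derivable_pt_id].
        - intros x Hx Hn. replace 0 with (-gp + gp * 1) by ring.
          apply derivable_pt_lim_plus; [apply Hd2; auto; lra|].
          apply derivable_pt_lim_scal, derivable_pt_lim_id. }
      pose proof (lim_right dp (fun x => 0 < x < Rr) 0 0 (fun w => - gp * w + (dp y + gp * y)) y Hl0
        ltac:(lra)) as L.
      assert (0 = - gp * 0 + (dp y + gp * y)); [|lra].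
      apply L.
      + intros w Hw. split; [lra| apply E; lra].
      + apply cont_lin.
    - assert (Hxb0 : dp xb = gm * xb).
      { replace (gm * xb) with ((fun w => gm * w + 0) xb) by (simpl; ring).
        apply (cont_left_eq dp (fun w => gm * w + 0) xb xb); [apply Hdpc; lra| apply cont_lin| lra|].
        intros z Hz. rewrite A; lra. }
      intros y Hy.
      assert (dp xb + gp * xb = dp y + gp * y); [|lra].
      apply (const_exc D xb y (fun t => dp t + gp * t)); [lra| |].
      + intros x Hx. apply continuity_pt_plus; [apply Hdpc; lra| apply continuity_pt_scal, derivable_continuous_pt, derivable_pt_id].
      + intros x Hx Hn. replace 0 with (-gp + gp * 1) by ring.
        apply derivable_pt_lim_plus; [apply Hd2; auto; lra|].
        apply derivable_pt_lim_scal, derivable_pt_lim_id. }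
  split.
  - pose proof (lim_left dp (fun x => 0 < x < Rr) (-sigma) Rr (fun y => (-gp) * y + (gm * xb + gp * xb))
      (Rr - xb) Hl1 ltac:(lra)) as L.
    assert (- sigma = (-gp) * Rr + (gm * xb + gp * xb)); [|lra].
    apply L; [| apply cont_lin]. intros z Hz; split; [lra| rewrite B; lra].
  - assert (Pxb : p xb = gm * xb^2 / 2).
    { destruct (Req_dec xb 0) as [->|Hx0]; [rewrite Hp0; field|].
      assert (p 0 - (gm/2 * 0^2 + 0 * 0 + 0) = p xb - (gm/2 * xb^2 + 0 * xb + 0)); [|rewrite Hp0 in H; lra].
      apply (const_exc nil 0 xb (fun t => p t - (gm/2 * t^2 + 0 * t + 0))); [lra| |].
      - intros x Hx. apply continuity_pt_minus; [apply Hpc; lra| apply cont_quad].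
      - intros x Hx _. eapply der_eq.
        + apply derivable_pt_lim_minus; [apply Hpd; lra| apply der_quad].
        + rewrite A; [field| lra]. }
    assert (p xb - (-gp/2 * xb^2 + (gm * xb + gp * xb) * xb + 0) =
            p Rr - (-gp/2 * Rr^2 + (gm * xb + gp * xb) * Rr + 0)).
    { apply (const_exc nil xb Rr (fun t => p t - (-gp/2 * t^2 + (gm * xb + gp * xb) * t + 0))); [lra| |].
      - intros x Hx. apply continuity_pt_minus; [apply Hpc; lra| apply cont_quad].
      - intros x Hx _. eapply der_eq.
        + apply derivable_pt_lim_minus; [apply Hpd; lra| apply der_quad].
        + rewrite B; [field| lra]. }
    rewrite Pxb, HpR in H. simpl in *. nra.
Qed.

Lemma alg_root gp gm Rr xb : 0 < gp -> 0 < gm -> 0 <= xb < Rr ->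
  gm * xb^2 / 2 + gm * xb * (Rr - xb) - gp * (Rr - xb)^2 / 2 = 0 ->
  alpha gp gm = (Rr - xb) / Rr.
Proof.
  intros Hgp Hgm Hx Q. unfold alpha. apply sqrt_lem_1.
  - apply Rmult_le_pos; [lra| left; apply Rinv_0_lt_compat; lra].
  - apply Rmult_le_pos; [lra| left; apply Rinv_0_lt_compat; lra].
  - apply (Rmult_eq_reg_r ((gp+gm) * Rr^2)); [| simpl; apply Rmult_integral_contrapositive; split; nra].
    field_simplify; [|lra|lra]. simpl in *. nra.
Qed.

Lemma alpha_bounds gp gm : 0 < gp -> 0 < gm -> 0 < alpha gp gm < 1.
Proof.
  intros. unfold alpha.
  assert (0 < gm / (gp+gm) < 1).
  { split; [apply Rdiv_lt_0_compat; lra|]. apply (Rmult_lt_reg_r (gp+gm)); [lra|].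
    field_simplify; lra. }
  split; [apply sqrt_lt_R0; lra|]. rewrite <- sqrt_1. apply sqrt_lt_1; lra.
Qed.

Lemma sigma_formula gp gm : 0 < gp -> 0 < gm ->
  sqrt ((gp + gm) * gm) = (gp + gm) * alpha gp gm.
Proof.
  intros. unfold alpha. apply sqrt_lem_1.
  - nra.
  - apply Rmult_le_pos; [lra| apply sqrt_pos].
  - replace ((gp + gm) * sqrt (gm / (gp + gm)) * ((gp + gm) * sqrt (gm / (gp + gm))))
      with ((gp+gm)*(gp+gm) * (sqrt (gm / (gp + gm)) * sqrt (gm / (gp + gm)))) by ring.
    rewrite sqrt_sqrt; [field; lra| apply Rmult_le_pos; [lra| left; apply Rinv_0_lt_compat; lra]].
Qed.

Lemma sol_props lam nc gp gm cbar cB sigma Rr n c p :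
  0 < lam -> 0 < nc -> nc < 1 -> 0 < gp -> 0 < gm -> 0 < cbar -> cbar < cB ->
  0 < sigma -> 0 < Rr ->
  monotone_TW_solution lam nc gp gm cbar cB sigma Rr n c p ->
  F lam nc gp gm cbar cB Rr = 0 /\ sigma = Rr * (sqrt ((gp + gm) * gm) - gm).
Proof.
  intros Hlam Hnc Hnc1 Hgp Hgm Hcb HcB Hs HR
    [D [dc [dp [Hn01 [Hc0 [Hp0 [Hncont [Hnder [Hn1 [Hn0 [Hccont [Hcder [Hdccont [[l Hdclim] [Hdcder [HcR [HcR' [[M HM] [Hdc0 [Hpcont [Hpder [Hdpcont [Hdpder [Hp00 [HpR [Hpout [Hdplim [Hn00 Hdplim0]]]]]]]]]]]]]]]]]]]]]]]]]]]].
  set (a := sqrt lam). set (k := sqrt nc). set (mu := a * k).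
  assert (Ha : 0 < a) by (apply sqrt_lt_R0; lra).
  assert (Hk : 0 < k < 1) by (split; [apply sqrt_lt_R0; lra| rewrite <- sqrt_1; apply sqrt_lt_1; lra]).
  assert (Hmu : 0 < mu) by (unfold mu; nra).
  assert (Haa : a * a = lam) by (apply sqrt_sqrt; lra).
  assert (Hkk : k * k = nc) by (apply sqrt_sqrt; lra).
  assert (Hmumu : mu * mu = lam * nc) by (unfold mu; rewrite <- Haa, <- Hkk; ring).
  assert (S1 : c 0 <= cbar).
  { destruct (Rle_dec (c 0) cbar) as [h|h]; auto. exfalso.
    destruct (Hccont 0 ltac:(lra) (c 0 - cbar) ltac:(lra)) as [d [Hd Hd']].
    assert (Hc' : forall x, -d < x <= 0 -> cbar < c x).
    { intros x Hx. destruct (Req_dec x 0) as [->|Hx0]; [lra|].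
      specialize (Hd' x). simpl in Hd'; unfold R_dist in Hd'.
      assert (Rabs (c x - c 0) < c 0 - cbar).
      { apply Hd'; split; [split; [exact I| auto]|]. rewrite Rminus_0_r, Rabs_left; lra. }
      apply Rabs_def2 in H. lra. }
    pose proof (ode_exc D (-d/2) 0 n (-gp/sigma) ltac:(lra)) as E.
    assert (Hkp : 0 < gp / sigma) by (apply Rdiv_lt_0_compat; lra).
    rewrite Hn00 in E.
    replace (- (- gp / sigma) * (- d / 2)) with (- (gp/sigma * (d/2))) in E by (field; lra).
    replace (- (- gp / sigma) * 0) with 0 in E by ring. rewrite exp_0 in E.
    assert (exp (- (gp / sigma * (d / 2))) < 1).
    { rewrite <- exp_0. apply exp_increasing. assert (0 < gp/sigma * (d/2)) by nra. lra. }
    assert (n (-d/2) <= 1) by apply Hn01.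
    pose proof (exp_pos (- (gp / sigma * (d / 2)))).
    assert (n (-d/2) * exp (- (gp / sigma * (d / 2))) < 1).
    { destruct (Hn01 (-d/2)). nra. }
    assert (n (-d/2) * exp (- (gp / sigma * (d / 2))) = 1 * 1); [|lra].
    apply E.
    + intros x Hx; apply Hncont; lra.
    + intros x Hx Hnx. eapply der_eq; [apply Hnder; auto; lra|].
      rewrite G_gt by (apply Hc'; lra). field; lra. }
  assert (Mono : forall x y, x <= y <= 0 -> c x <= c y).
  { intros x y Hxy. apply (mono_nil x y c dc); [lra| intros; apply Hccont; lra|].
    intros z Hz; split; [apply Hcder; lra| apply Hdc0; lra]. }
  assert (S3 : forall x, x < 0 -> c x < cbar).
  { intros x0 Hx0. destruct (Rlt_dec (c x0) cbar) as [h|h]; auto. exfalso.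
    assert (Cc : forall z, x0 < z < 0 -> c z = cbar).
    { intros z Hz. pose proof (Mono x0 z ltac:(lra)). pose proof (Mono z 0 ltac:(lra)). lra. }
    destruct (exists_not_in D x0 0 Hx0) as [y [Hy Ny]].
    assert (ny : n y = 1).
    { pose proof (ode_exc D y 0 n 0 ltac:(lra)) as E.
      rewrite Hn00 in E. replace (-0 * y) with 0 in E by ring. replace (-0 * 0) with 0 in E by ring.
      rewrite exp_0 in E. assert (n y * 1 = 1 * 1); [|lra]. apply E.
      - intros x Hx; apply Hncont; lra.
      - intros x Hx Hnx. eapply der_eq; [apply Hnder; auto; lra|].
        rewrite Cc by lra. rewrite G_eq. field; lra. }
    assert (Hdz : forall z, x0 < z < 0 -> dc z = 0).
    { intros z Hz. apply (uniqueness_limite c z); [apply Hcder; lra|].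
      apply (const_der_zero c x0 0 z cbar); auto. }
    pose proof (const_der_zero dc x0 0 y 0 Hdz Hy) as Z.
    pose proof (Hdcder y ltac:(lra) Ny) as W.
    rewrite ny, psi_1, Cc in W by lra.
    pose proof (uniqueness_limite dc y _ _ Z W). nra. }
  assert (S4 : forall x, x < 0 -> 0 < n x < 1).
  { intros x Hx.
    assert (Hkp : 0 < gm / sigma) by (apply Rdiv_lt_0_compat; lra).
    pose proof (ode_exc D x 0 n (gm/sigma) ltac:(lra)) as E.
    rewrite Hn00 in E. replace (- (gm / sigma) * 0) with 0 in E by ring. rewrite exp_0 in E.
    assert (1 < exp (- (gm / sigma) * x)).
    { rewrite <- exp_0. apply exp_increasing. nra. }
    assert (n x * exp (- (gm / sigma) * x) = 1) as E'.
    { rewrite E; [ring| intros z Hz; apply Hncont; lra|].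
      intros z Hz Hnz. eapply der_eq; [apply Hnder; auto; lra|].
      rewrite G_lt by (apply S3; lra). field; lra. }
    destruct (Hn01 x). split.
    - destruct H0 as [H0| H0]; auto. rewrite <- H0 in E'. lra.
    - nra. }
  assert (S6 : forall x, x <= 0 -> (dc x - mu * c x) * exp (mu * x) = dc 0 - mu * c 0).
  { intros x Hx. pose proof (ode_exc D x 0 (fun z => dc z - mu * c z) (-mu) Hx) as E.
    replace (- - mu * x) with (mu * x) in E by ring. replace (- - mu * 0) with 0 in E by ring.
    rewrite exp_0, Rmult_1_r in E. apply E.
    - intros z Hz. apply continuity_pt_minus; [apply Hdccont; lra|].
      apply continuity_pt_scal. apply Hccont; lra.
    - intros z Hz Hnz. eapply der_eq.
      + apply derivable_pt_lim_minus; [apply Hdcder; auto; lra|].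
        apply derivable_pt_lim_scal. apply Hcder; lra.
      + rewrite psi_mid by (apply S4; lra). rewrite <- Hmumu. ring. }
  assert (HM0 : 0 <= M) by (pose proof (HM 0 ltac:(lra)); pose proof (Rabs_pos (c 0)); lra).
  assert (HcM : forall x, x <= 0 -> 0 <= c x <= M).
  { intros x Hx. pose proof (HM x Hx). pose proof (Hc0 x). rewrite Rabs_right in H; lra. }
  set (v0 := dc 0 - mu * c 0) in S6.
  assert (S7 : v0 = 0).
  { destruct (Rtotal_order v0 0) as [Hv|[Hv|Hv]]; auto; exfalso.
    - set (t := - v0 / (mu * M + 1)).
      assert (Ht : 0 < t) by (unfold t; apply Rdiv_lt_0_compat; nra).
      set (s := Rmin t 1 / 2).
      assert (Hs1 : 0 < s) by (unfold s; pose proof (Rmin_pos t 1 Ht ltac:(lra)); lra).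
      assert (Hs2 : s < t) by (unfold s; pose proof (Rmin_l t 1); lra).
      assert (Hs3 : s < 1) by (unfold s; pose proof (Rmin_r t 1); lra).
      set (x := ln s / mu).
      assert (Hx : x < 0).
      { assert (ln s < 0) by (rewrite <- ln_1; apply ln_increasing; lra).
        assert (0 < - ln s / mu) by (apply Rdiv_lt_0_compat; lra).
        replace x with (- (- ln s / mu)) by (unfold x; field; lra). lra. }
      assert (Hex : exp (mu * x) = s) by (unfold x; replace (mu * (ln s / mu)) with (ln s) by (field; lra); apply exp_ln; lra).
      pose proof (S6 x (Rlt_le _ _ Hx)) as E. rewrite Hex in E.
      pose proof (Hdc0 x ltac:(lra)). pose proof (HcM x ltac:(lra)).
      assert (Htt : t * (mu * M + 1) = - v0) by (unfold t; field; nra).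
      assert (dc x * s = v0 + mu * c x * s) by (rewrite <- E; ring).
      assert (mu * c x * s <= mu * M * t).
      { apply Rle_trans with (mu * M * s); [| apply Rmult_le_compat_l; nra].
        apply Rmult_le_compat_r; [lra| apply Rmult_le_compat_l; lra]. }
      assert (0 <= dc x * s) by nra. nra.
    - set (t := v0 / (2 * (2 * M + 1))).
      assert (Ht : 0 < t) by (unfold t; apply Rdiv_lt_0_compat; nra).
      set (s := Rmin t 1 / 2).
      assert (Hs1 : 0 < s) by (unfold s; pose proof (Rmin_pos t 1 Ht ltac:(lra)); lra).
      assert (Hs2 : s < t) by (unfold s; pose proof (Rmin_l t 1); lra).
      assert (Hs3 : s < 1) by (unfold s; pose proof (Rmin_r t 1); lra).
      set (x := ln s / mu).
      assert (Hx : x < 0).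
      { assert (ln s < 0) by (rewrite <- ln_1; apply ln_increasing; lra).
        assert (0 < - ln s / mu) by (apply Rdiv_lt_0_compat; lra).
        replace x with (- (- ln s / mu)) by (unfold x; field; lra). lra. }
      assert (Hex : exp (mu * x) = s) by (unfold x; replace (mu * (ln s / mu)) with (ln s) by (field; lra); apply exp_ln; lra).
      set (K := v0 / s).
      assert (HK : 2 * (2 * M + 1) < K).
      { assert (HKs : K * s = v0) by (unfold K; field; lra).
        assert (v0 = t * (2 * (2*M+1))) by (unfold t; field; lra).
        apply (Rmult_lt_reg_r s); [lra|]. nra. }
      assert (Hlow : forall z, x - 1 <= z <= x -> K <= dc z).
      { intros z Hz. pose proof (S6 z ltac:(lra)) as E.
        assert (exp (mu * z) <= s) by (rewrite <- Hex; apply exp_le; nra).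
        pose proof (exp_pos (mu * z)). pose proof (HcM z ltac:(lra)).
        assert (HKs : K * s = v0) by (unfold K; field; lra).
        apply (Rmult_le_reg_r s); [lra|].
        assert (dc z * exp (mu * z) = v0 + mu * c z * exp (mu * z)) by (rewrite <- E; ring).
        assert (0 <= mu * c z * exp (mu * z)) by (apply Rmult_le_pos; [apply Rmult_le_pos|]; lra).
        pose proof (Hdc0 z ltac:(lra)).
        assert (dc z * exp (mu * z) <= dc z * s) by (apply Rmult_le_compat_l; lra).
        lra. }
      assert (c (x-1) - K * (x - 1) <= c x - K * x).
      { apply (mono_nil (x-1) x (fun z => c z - K * z) (fun z => dc z - K * 1)); [lra| |].
        - intros z Hz. apply continuity_pt_minus; [apply Hccont; lra|].
          apply continuity_pt_scal, derivable_continuous_pt, derivable_pt_id.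
        - intros z Hz. split.
          + apply derivable_pt_lim_minus; [apply Hcder; lra|].
            apply derivable_pt_lim_scal, derivable_pt_lim_id.
          + pose proof (Hlow z ltac:(lra)). lra. }
      pose proof (HcM x ltac:(lra)). pose proof (HcM (x-1) ltac:(lra)). nra. }
  assert (S8 : dc 0 = mu * c 0) by (unfold v0 in S7; lra).
  assert (S9 : forall y, 0 <= y < Rr -> c y = c 0 * fk k (a * y)).
  { intros y Hy.
    assert (U : (dc 0 + a * c 0) * exp (- a * 0) = (dc y + a * c y) * exp (- a * y)).
    { apply (ode_exc D 0 y (fun z => dc z + a * c z) a); [lra| |].
      - intros z Hz. apply continuity_pt_plus; [apply Hdccont; lra|].
        apply continuity_pt_scal. apply Hccont; lra.
      - intros z Hz Hnz. eapply der_eq.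
        + apply derivable_pt_lim_plus; [apply Hdcder; auto; lra|].
          apply derivable_pt_lim_scal. apply Hcder; lra.
        + rewrite Hn1 by lra. rewrite psi_1, <- Haa. ring. }
    assert (W : (dc 0 - a * c 0) * exp (- - a * 0) = (dc y - a * c y) * exp (- - a * y)).
    { apply (ode_exc D 0 y (fun z => dc z - a * c z) (-a)); [lra| |].
      - intros z Hz. apply continuity_pt_minus; [apply Hdccont; lra|].
        apply continuity_pt_scal. apply Hccont; lra.
      - intros z Hz Hnz. eapply der_eq.
        + apply derivable_pt_lim_minus; [apply Hdcder; auto; lra|].
          apply derivable_pt_lim_scal. apply Hcder; lra.
        + rewrite Hn1 by lra. rewrite psi_1, <- Haa. ring. }
    replace (- a * 0) with 0 in U by ring. replace (- - a * 0) with 0 in W by ring.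
    replace (- - a * y) with (a * y) in W by ring. replace (- a * y) with (- (a * y)) in U by ring.
    rewrite exp_0, Rmult_1_r in U, W. rewrite exp_neg in U.
    unfold fk, cosh, sinh. rewrite exp_neg.
    pose proof (exp_pos (a * y)). set (E := exp (a * y)) in *.
    assert (Hu : dc y + a * c y = (dc 0 + a * c 0) * E) by (rewrite U; field; lra).
    assert (Hw : dc y - a * c y = (dc 0 - a * c 0) / E) by (rewrite W; field; lra).
    replace (c y) with (((dc y + a * c y) - (dc y - a * c y)) / (2 * a)) by (field; lra).
    rewrite Hu, Hw, S8. unfold mu. field. lra. }
  assert (S9' : forall y, 0 <= y <= Rr -> c y = c 0 * fk k (a * y)).
  { intros y Hy. destruct (Req_dec y Rr) as [->|Hne]; [|apply S9; lra].
    apply (cont_left_eq c (fun y => c 0 * fk k (a * y)) Rr Rr); [apply Hccont; lra| | lra|].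
    - apply continuity_pt_scal, cont_fk.
    - intros z Hz. apply S9; lra. }
  assert (Hfk0 : forall kk, fk kk 0 = 1) by (intros; unfold fk; rewrite cosh_0, sinh_0; ring).
  assert (HfR : 0 < fk k (a * Rr)) by (apply fk_pos; nra).
  assert (Hc00 : 0 < c 0).
  { destruct (Hc0 0) as [h|h]; auto. pose proof (S9' Rr ltac:(lra)). rewrite <- h in H. lra. }
  assert (S10 : exists xb, 0 <= xb < Rr /\ (forall y, 0 < y < xb -> c y < cbar) /\
     (forall y, xb < y <= Rr -> cbar < c y) /\ (xb = 0 \/ c xb = cbar)).
  { destruct (Rle_dec cbar (c 0)) as [h|h].
    - exists 0. split; [lra|]. split; [intros; lra|]. split; [|auto].
      intros y Hy. rewrite S9' by lra. pose proof (fk_gt1 k (a*y) ltac:(lra) ltac:(nra)). nra.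
    - destruct (IVT (fun y => c 0 * fk k (a * y) - cbar) 0 Rr) as [z [Hz Ez]]; [| lra | | |].
      + intros x. apply continuity_pt_minus; [apply continuity_pt_scal, cont_fk| apply continuity_pt_const; intros u v; auto].
      + simpl. rewrite Rmult_0_r, Hfk0. lra.
      + simpl. rewrite <- S9' by lra. lra.
      + simpl in Ez. assert (z <> 0) by (intros ->; rewrite Rmult_0_r, Hfk0 in Ez; lra).
        assert (z <> Rr) by (intros ->; rewrite <- S9' in Ez by lra; lra).
        exists z. split; [lra|]. split; [|split].
        * intros y Hy. rewrite S9' by lra. pose proof (fk_lt k (a*y) (a*z) ltac:(lra) ltac:(nra) ltac:(nra)). nra.
        * intros y Hy. rewrite S9' by lra. pose proof (fk_lt k (a*z) (a*y) ltac:(lra) ltac:(nra) ltac:(nra)). nra.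
        * right. rewrite S9' by lra. lra. }
  destruct S10 as [xb [Hxb [Hlt [Hgt Hxbc]]]].
  destruct (p_analysis gp gm Rr xb p dp D sigma Hgp Hgm Hxb) as [Hsig Q].
  - intros x Hx; apply Hpcont; lra.
  - exact Hpder.
  - exact Hdpcont.
  - intros x Hx Hnx. eapply der_eq; [apply Hdpder; auto; lra|]. rewrite G_lt by (apply Hlt; lra). ring.
  - intros x Hx Hnx. eapply der_eq; [apply Hdpder; auto; lra|]. rewrite G_gt by (apply Hgt; lra). ring.
  - exact Hp00.
  - exact HpR.
  - exact Hdplim.
  - exact Hdplim0.
  - pose proof (alg_root gp gm Rr xb Hgp Hgm Hxb Q) as Hal.
    pose proof (alpha_bounds gp gm Hgp Hgm) as Hab.
    assert (Hxb0 : xb <> 0).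
    { intros ->. rewrite Hal in Hab. unfold Rdiv in Hab. rewrite Rminus_0_r, Rinv_r in Hab; lra. }
    destruct Hxbc as [?|Hcx]; [contradiction|].
    split.
    + unfold F. fold a. fold k.
      replace (a * (1 - alpha gp gm) * Rr) with (a * xb) by (rewrite Hal; field; lra).
      pose proof (S9' xb ltac:(lra)) as E1. pose proof (S9' Rr ltac:(lra)) as E2.
      rewrite HcR in E2. rewrite Hcx in E1.
      assert (Hfx : 0 < fk k (a * xb)) by (apply fk_pos; nra).
      rewrite E1, E2. unfold fk in *. field. split; lra.
    + rewrite sigma_formula by auto. rewrite Hal, Hsig. field. lra.
Qed.

Lemma F_eq lam nc gp gm cbar cB R :
  F lam nc gp gm cbar cB R =
  cbar / cB * fk (sqrt nc) (sqrt lam * R) - fk (sqrt nc) (sqrt lam * (1 - alpha gp gm) * R).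
Proof. unfold F, fk. ring. Qed.

Lemma fk_exp_le k y : 0 <= k <= 1 -> 0 <= y -> fk k y <= exp y.
Proof.
  intros Hk Hy. unfold fk, cosh, sinh. rewrite exp_neg.
  pose proof (exp_pos y). assert (1 <= exp y) by (rewrite <- exp_0; apply exp_le; auto).
  assert (/ exp y <= exp y).
  { apply (Rmult_le_reg_r (exp y)); [lra|]. rewrite Rinv_l by lra. nra. }
  nra.
Qed.

Lemma fk_exp_ge k y : 0 <= k -> 0 <= y -> exp y / 2 <= fk k y.
Proof.
  intros Hk Hy. unfold fk. pose proof (sinh_nneg y Hy). unfold cosh. rewrite exp_neg.
  pose proof (exp_pos y). assert (0 < / exp y) by (apply Rinv_0_lt_compat; lra). nra.
Qed.

Lemma root_exists lam nc gp gm cbar cB :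
  0 < lam -> 0 < nc -> nc < 1 -> 0 < gp -> 0 < gm -> 0 < cbar -> cbar < cB ->
  exists R, 0 < R /\ F lam nc gp gm cbar cB R = 0.
Proof.
  intros Hlam Hnc Hnc1 Hgp Hgm Hcb HcB.
  set (a := sqrt lam). set (k := sqrt nc). set (al := alpha gp gm).
  assert (Ha : 0 < a) by (apply sqrt_lt_R0; lra).
  assert (Hk : 0 < k < 1) by (split; [apply sqrt_lt_R0; lra| rewrite <- sqrt_1; apply sqrt_lt_1; lra]).
  pose proof (alpha_bounds gp gm Hgp Hgm) as Hal. fold al in Hal.
  set (r := cbar / cB).
  assert (Hr : 0 < r < 1).
  { unfold r; split; [apply Rdiv_lt_0_compat; lra|]. apply (Rmult_lt_reg_r cB); [lra|].
    field_simplify; lra. }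
  set (T := ln (2 / r + 1) / (a * al)).
  assert (HT : 0 < T).
  { unfold T. apply Rdiv_lt_0_compat; [|nra]. rewrite <- ln_1. apply ln_increasing; [lra|].
    assert (0 < 2 / r) by (apply Rdiv_lt_0_compat; lra). lra. }
  assert (Fc : continuity (fun R => F lam nc gp gm cbar cB R)).
  { intros x. apply (local_cont _ (fun R => r * fk k (a * R) - fk k (a * (1 - al) * R)) x 1); [lra| |].
    - intros z _. rewrite F_eq. reflexivity.
    - apply continuity_pt_minus; [apply continuity_pt_scal, cont_fk|].
      apply cont_fk. }
  destruct (IVT (fun R => F lam nc gp gm cbar cB R) 0 T Fc HT) as [z [Hz Ez]].
  - rewrite F_eq. rewrite !Rmult_0_r. unfold fk. rewrite cosh_0, sinh_0. fold r. lra.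
  - rewrite F_eq. fold a k al r.
    set (b := a * (1 - al)).
    assert (Hb : 0 <= b * T) by (unfold b; apply Rmult_le_pos; [|lra]; apply Rmult_le_pos; lra).
    pose proof (fk_exp_le k (b * T) ltac:(lra) Hb).
    pose proof (fk_exp_ge k (a * T) ltac:(lra) ltac:(nra)).
    assert (E : exp (a * T) = exp (b * T) * (2 / r + 1)).
    { replace (a * T) with (b * T + ln (2 / r + 1)).
      - rewrite exp_plus, exp_ln; auto. assert (0 < 2 / r) by (apply Rdiv_lt_0_compat; lra). lra.
      - unfold b, T. field. split; lra. }
    rewrite E in H0. pose proof (exp_pos (b * T)).
    assert (r * (exp (b * T) * (2 / r + 1) / 2) = exp (b * T) * (1 + r/2)) by (field; lra).
    assert (r * fk k (a * T) >= exp (b*T) * (1 + r/2)) by nra.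
    nra.
  - exists z. split; auto. destruct (Req_dec z 0) as [->|Hz0]; [|lra].
    exfalso. rewrite F_eq, !Rmult_0_r in Ez. unfold fk in Ez. rewrite cosh_0, sinh_0 in Ez.
    assert (cbar / cB < 1) by (fold r; lra). lra.
Qed.

Lemma root_cmp lam nc gp gm r r' R R' :
  0 < lam -> 0 < nc -> nc < 1 -> 0 < gp -> 0 < gm -> 0 < R -> 0 < R' -> 0 < r' < r ->
  r * fk (sqrt nc) (sqrt lam * R) = fk (sqrt nc) (sqrt lam * (1 - alpha gp gm) * R) ->
  r' * fk (sqrt nc) (sqrt lam * R') = fk (sqrt nc) (sqrt lam * (1 - alpha gp gm) * R') ->
  R < R'.
Proof.
  intros Hlam Hnc Hnc1 Hgp Hgm HR HR' Hr E E'.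
  set (a := sqrt lam) in *. set (k := sqrt nc) in *.
  assert (Ha : 0 < a) by (apply sqrt_lt_R0; lra).
  assert (Hk : 0 < k < 1) by (split; [apply sqrt_lt_R0; lra| rewrite <- sqrt_1; apply sqrt_lt_1; lra]).
  pose proof (alpha_bounds gp gm Hgp Hgm) as Hal.
  set (b := a * (1 - alpha gp gm)) in *.
  assert (Hb : 0 < b < a) by (unfold b; split; nra).
  destruct (Rlt_dec R R') as [h|h]; auto. exfalso.
  pose proof (fk_pos k (a*R) ltac:(lra) ltac:(nra)). pose proof (fk_pos k (a*R') ltac:(lra) ltac:(nra)).
  destruct (Req_dec R R') as [<-|Hne].
  - rewrite <- E in E'. nra.
  - pose proof (H_mono k a b R' R Hk Hb ltac:(lra)).
    rewrite <- E, <- E' in H1. assert (0 < fk k (a*R) * fk k (a*R')) by (apply Rmult_lt_0_compat; lra). nra.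
Qed.

Definition nfun s gm R x := if Rle_dec x 0 then exp (gm / s * x) else if Rle_dec x R then 1 else 0.
Definition cfun c0 mu a k R cB x :=
  if Rlt_dec x 0 then c0 * exp (mu * x) else if Rle_dec x R then c0 * fk k (a * x) else cB.
Definition dcfun c0 mu a k x :=
  if Rlt_dec x 0 then c0 * (mu * exp (mu * x)) else c0 * (a * gk k (a * x)).
Definition pfun gp gm xb R x :=
  if Rlt_dec x 0 then 0 else if Rle_dec x xb then gm / 2 * x ^ 2 + 0 * x + 0
  else if Rle_dec x R then (- gp / 2) * x ^ 2 + (gm * xb + gp * xb) * x + (- gm * xb ^ 2 / 2 - gp * xb ^ 2 / 2)
  else 0.
Definition dpfun gp gm xb x :=
  if Rle_dec x xb then gm * x + 0 else (- gp) * x + (gm * xb + gp * xb).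

Ltac cases := unfold nfun, cfun, dcfun, pfun, dpfun;
  repeat (match goal with |- context [Rle_dec ?a ?b] => destruct (Rle_dec a b)
                       | |- context [Rlt_dec ?a ?b] => destruct (Rlt_dec a b) end); try lra.

Lemma local_der2 f g x a b l : a < x < b -> (forall z, a < z < b -> f z = g z) ->
  derivable_pt_lim g x l -> derivable_pt_lim f x l.
Proof.
  intros Hx H Hg. apply (local_der f g x (Rmin (x - a) (b - x))); auto.
  - apply Rmin_pos; lra.
  - intros z Hz. pose proof (Rmin_l (x-a) (b-x)). pose proof (Rmin_r (x-a) (b-x)). apply H; lra.
Qed.

Lemma local_cont2 f g x a b : a < x < b -> (forall z, a < z < b -> f z = g z) ->
  continuity_pt g x -> continuity_pt f x.
Proof.
  intros Hx H Hg. apply (local_cont f g x (Rmin (x - a) (b - x))); auto.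
  - apply Rmin_pos; lra.
  - intros z Hz. pose proof (Rmin_l (x-a) (b-x)). pose proof (Rmin_r (x-a) (b-x)). apply H; lra.
Qed.

Lemma der_cexp c0 mu x : derivable_pt_lim (fun x => c0 * exp (mu * x)) x (c0 * (mu * exp (mu * x))).
Proof. apply derivable_pt_lim_scal, der_exp_lin. Qed.
Lemma der_cmuexp c0 mu x : derivable_pt_lim (fun x => c0 * (mu * exp (mu * x))) x (c0 * (mu * (mu * exp (mu * x)))).
Proof. apply derivable_pt_lim_scal, derivable_pt_lim_scal, der_exp_lin. Qed.
Lemma der_cfk c0 k a x : derivable_pt_lim (fun x => c0 * fk k (a * x)) x (c0 * (a * gk k (a * x))).
Proof. apply derivable_pt_lim_scal, der_fk. Qed.
Lemma der_cgk c0 k a x : derivable_pt_lim (fun x => c0 * (a * gk k (a * x))) x (c0 * (a * (a * fk k (a * x)))).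
Proof. apply derivable_pt_lim_scal, derivable_pt_lim_scal, der_gk. Qed.

Lemma existence lam nc gp gm cbar cB RR :
  0 < lam -> 0 < nc -> nc < 1 -> 0 < gp -> 0 < gm -> 0 < cbar -> cbar < cB ->
  0 < RR -> F lam nc gp gm cbar cB RR = 0 ->
  0 < RR * (sqrt ((gp + gm) * gm) - gm) /\
  admits_monotone_TW lam nc gp gm cbar cB (RR * (sqrt ((gp + gm) * gm) - gm)) RR.
Proof.
  intros Hlam Hnc Hnc1 Hgp Hgm Hcb HcB HR HF.
  set (a := sqrt lam). set (k := sqrt nc). set (mu := a * k). set (al := alpha gp gm).
  assert (Ha : 0 < a) by (apply sqrt_lt_R0; lra).
  assert (Hk : 0 < k < 1) by (split; [apply sqrt_lt_R0; lra| rewrite <- sqrt_1; apply sqrt_lt_1; lra]).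
  assert (Hmu : 0 < mu) by (unfold mu; nra).
  assert (Haa : a * a = lam) by (apply sqrt_sqrt; lra).
  assert (Hkk : k * k = nc) by (apply sqrt_sqrt; lra).
  assert (Hmumu : mu * mu = lam * nc) by (unfold mu; rewrite <- Haa, <- Hkk; ring).
  pose proof (alpha_bounds gp gm Hgp Hgm) as Hal. fold al in Hal.
  assert (Hal2 : al * al = gm / (gp + gm)).
  { unfold al, alpha. apply sqrt_sqrt. apply Rmult_le_pos; [lra| left; apply Rinv_0_lt_compat; lra]. }
  set (sg := RR * (sqrt ((gp + gm) * gm) - gm)).
  set (xb := (1 - al) * RR).
  assert (Hxb : 0 < xb < RR) by (unfold xb; split; nra).
  assert (Hsg : sg = gp * (RR - xb) - gm * xb).
  { unfold sg. rewrite sigma_formula by auto. fold al. unfold xb. ring. }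
  assert (Hsgp : 0 < sg).
  { unfold sg. apply Rmult_lt_0_compat; auto.
    assert (sqrt (gm * gm) < sqrt ((gp + gm) * gm)) by (apply sqrt_lt_1; nra).
    rewrite sqrt_square in H by lra. lra. }
  assert (Q : gm * xb^2 / 2 + gm * xb * (RR - xb) - gp * (RR - xb)^2 / 2 = 0).
  { assert (Hal3 : (gp+gm)*(al*al) = gm) by (rewrite Hal2; field; lra).
    replace (gm * xb^2 / 2 + gm * xb * (RR - xb) - gp * (RR - xb)^2 / 2) with
      ((gm - (gp+gm)*(al*al)) * RR^2/2) by (unfold xb; field).
    rewrite Hal3. field. }
  rewrite F_eq in HF. fold a k al in HF.
  replace (a * (1 - al) * RR) with (a * xb) in HF by (unfold xb; ring).
  assert (HfR : 0 < fk k (a * RR)) by (apply fk_pos; nra).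
  assert (Hfx : 1 < fk k (a * xb)) by (apply fk_gt1; nra).
  set (c0 := cB / fk k (a * RR)).
  assert (Hc0 : 0 < c0) by (unfold c0; apply Rdiv_lt_0_compat; lra).
  assert (Hc0R : c0 * fk k (a * RR) = cB) by (unfold c0; field; lra).
  assert (Hc0x : c0 * fk k (a * xb) = cbar).
  { unfold c0. assert (E : fk k (a*xb) = cbar/cB * fk k (a*RR)) by lra. rewrite E. field. split; lra. }
  assert (Hc0c : c0 < cbar) by nra.
  assert (Hfk0 : forall kk, fk kk 0 = 1) by (intros; unfold fk; rewrite cosh_0, sinh_0; ring).
  assert (Hgk0 : gk k 0 = k) by (unfold gk; rewrite cosh_0, sinh_0; ring).
  split; [exact Hsgp|].
  exists (nfun sg gm RR), (cfun c0 mu a k RR cB), (pfun gp gm xb RR).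
  exists [0; xb], (dcfun c0 mu a k), (dpfun gp gm xb).
  assert (Hgs : 0 < gm / sg) by (apply Rdiv_lt_0_compat; lra).
  assert (Hen : forall x, x < 0 -> 0 < exp (gm / sg * x) < 1).
  { intros x Hx. split; [apply exp_pos|]. rewrite <- exp_0. apply exp_increasing. nra. }
  assert (Hem : forall x, x < 0 -> 0 < exp (mu * x) < 1).
  { intros x Hx. split; [apply exp_pos|]. rewrite <- exp_0. apply exp_increasing. nra. }
  assert (Hcl : forall x, 0 <= x < xb -> c0 * fk k (a * x) < cbar).
  { intros x Hx. rewrite <- Hc0x. apply Rmult_lt_compat_l; auto. apply fk_lt; nra. }
  assert (Hcg : forall x, xb < x -> cbar < c0 * fk k (a * x)).
  { intros x Hx. rewrite <- Hc0x. apply Rmult_lt_compat_l; auto. apply fk_lt; nra. }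
  assert (Hcz : forall z, z = 0 -> c0 * fk k (a * z) = c0 * exp (mu * z)).
  { intros z ->. rewrite !Rmult_0_r, Hfk0, exp_0. ring. }
  assert (Hdz : forall z, z = 0 -> c0 * (a * gk k (a * z)) = c0 * (mu * exp (mu * z))).
  { intros z ->. rewrite !Rmult_0_r, Hgk0, exp_0. unfold mu. ring. }
  assert (Hnz : forall z, z = 0 -> exp (gm / sg * z) = 1).
  { intros z ->. rewrite Rmult_0_r, exp_0. ring. }
  assert (Hq2 : forall z, z = RR -> - gp / 2 * z ^ 2 + (gm * xb + gp * xb) * z + (- gm * xb ^ 2 / 2 - gp * xb ^ 2 / 2) = 0).
  { intros z ->. rewrite <- Q. field. }
  assert (Hq12 : forall z, z = xb -> gm / 2 * z ^ 2 + 0 * z + 0 = - gp / 2 * z ^ 2 + (gm * xb + gp * xb) * z + (- gm * xb ^ 2 / 2 - gp * xb ^ 2 / 2)).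
  { intros z ->. field. }
  assert (Hq0 : forall z, z = 0 -> gm / 2 * z ^ 2 + 0 * z + 0 = 0).
  { intros z ->. field. }
  assert (Hcont_const : forall (C x : R), continuity_pt (fun _ => C) x).
  { intros C x. apply continuity_pt_const. intros u v. reflexivity. }
  split.
  { intros x. cases. split; [left; apply exp_pos| rewrite <- exp_0; apply exp_le; nra]. }
  split.
  { intros x. cases.
    - pose proof (exp_pos (mu*x)). nra.
    - pose proof (fk_pos k (a*x) ltac:(lra) ltac:(nra)). nra. }
  split.
  { intros x. cases.
    - assert (0 <= x^2) by (apply pow2_ge_0). nra.
    - assert (E : - gp / 2 * x ^ 2 + (gm * xb + gp * xb) * x + (- gm * xb ^ 2 / 2 - gp * xb ^ 2 / 2)
        = (RR - x) / (RR - xb) * (gm * xb^2 / 2) + gp * (x - xb) * (RR - x) / 2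
          + (x - xb) / (RR - xb) * (gm * xb^2 / 2 + gm * xb * (RR - xb) - gp * (RR - xb)^2 / 2))
        by (field; lra).
      rewrite E, Q.
      assert (0 <= (RR - x) / (RR - xb)) by (apply Rdiv_le_0_compat; lra).
      assert (0 <= gm * xb^2 / 2) by (assert (0 <= xb^2) by apply pow2_ge_0; nra).
      assert (0 <= (RR - x) / (RR - xb) * (gm * xb^2 / 2)) by (apply Rmult_le_pos; lra).
      assert (0 <= gp * (x - xb) * (RR - x)) by (apply Rmult_le_pos; [apply Rmult_le_pos|]; lra).
      lra. }
  split.
  { intros x Hx. destruct (Rlt_dec x 0) as [h|h].
    - apply (local_cont2 _ (fun x => exp (gm / sg * x)) x (x-1) 0); [lra| |].
      + intros z Hz. cases.
      + eapply der_cont; apply der_exp_lin.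
    - replace x with 0 by lra.
      apply (junction_cont _ (fun x => exp (gm / sg * x)) (fun _ => 1) 0 RR); [lra| | | |].
      + intros z Hz. cases.
      + intros z Hz. cases. apply Hnz; lra.
      + eapply der_cont; apply der_exp_lin.
      + apply Hcont_const. }
  split.
  { intros x Hx Hn.
    apply (local_der2 _ (fun x => exp (gm / sg * x)) x (x-1) 0); [lra| intros z Hz; cases|].
    eapply der_eq; [apply der_exp_lin|].
    assert (E1 : nfun sg gm RR x = exp (gm / sg * x)) by cases.
    assert (E2 : cfun c0 mu a k RR cB x = c0 * exp (mu * x)) by cases.
    rewrite E1, E2. rewrite G_lt by (pose proof (Hem x Hx); nra). field. lra. }
  split.
  { intros x Hx. cases. apply Hnz; lra. }
  split.
  { intros x Hx. cases. }
  split.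
  { intros x Hx. destruct (Rlt_dec x 0) as [h|h]; [|destruct (Req_dec x 0) as [h'|h']].
    - apply (local_cont2 _ (fun x => c0 * exp (mu * x)) x (x-1) 0); [lra| intros z Hz; cases|].
      eapply der_cont; apply der_cexp.
    - subst x. apply (junction_cont _ (fun x => c0 * exp (mu * x)) (fun x => c0 * fk k (a * x)) 0 RR); [lra| | | |].
      + intros z Hz. cases. apply Hcz; lra.
      + intros z Hz. cases.
      + eapply der_cont; apply der_cexp.
      + eapply der_cont; apply der_cfk.
    - destruct (Req_dec x RR) as [->|h''].
      + apply (junction_cont _ (fun x => c0 * fk k (a * x)) (fun _ => cB) RR RR); [lra| | | |].
        * intros z Hz. cases.
        * intros z Hz. cases. replace z with RR by lra. auto.
        * eapply der_cont; apply der_cfk.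
        * apply Hcont_const.
      + apply (local_cont2 _ (fun x => c0 * fk k (a * x)) x 0 RR); [lra| intros z Hz; cases|].
        eapply der_cont; apply der_cfk. }
  split.
  { intros x Hx. destruct (Rlt_dec x 0) as [h|h]; [|destruct (Req_dec x 0) as [h'|h']].
    - apply (local_der2 _ (fun x => c0 * exp (mu * x)) x (x-1) 0); [lra| intros z Hz; cases|].
      eapply der_eq; [apply der_cexp| cases].
    - subst x. apply (junction_der _ (fun x => c0 * exp (mu * x)) (fun x => c0 * fk k (a * x)) 0 RR); [lra| | | |].
      + intros z Hz. cases. apply Hcz; lra.
      + intros z Hz. cases.
      + eapply der_eq; [apply der_cexp| cases]. symmetry. apply Hdz; lra.
      + eapply der_eq; [apply der_cfk| cases].
    - apply (local_der2 _ (fun x => c0 * fk k (a * x)) x 0 RR); [lra| intros z Hz; cases|].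
      eapply der_eq; [apply der_cfk| cases]. }
  split.
  { intros x Hx. destruct (Rlt_dec x 0) as [h|h]; [|destruct (Req_dec x 0) as [h'|h']].
    - apply (local_cont2 _ (fun x => c0 * (mu * exp (mu * x))) x (x-1) 0); [lra| intros z Hz; cases|].
      eapply der_cont; apply der_cmuexp.
    - subst x. apply (junction_cont _ (fun x => c0 * (mu * exp (mu * x))) (fun x => c0 * (a * gk k (a * x))) 0 RR); [lra| | | |].
      + intros z Hz. cases. apply Hdz; lra.
      + intros z Hz. cases.
      + eapply der_cont; apply der_cmuexp.
      + eapply der_cont; apply der_cgk.
    - apply (local_cont2 _ (fun x => c0 * (a * gk k (a * x))) x 0 (x+1)); [lra| intros z Hz; cases|].
      eapply der_cont; apply der_cgk. }
  split.
  { exists (dcfun c0 mu a k RR). apply cont_lim.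
    apply (local_cont2 _ (fun x => c0 * (a * gk k (a * x))) RR 0 (RR+1)); [lra| intros z Hz; cases|].
    eapply der_cont; apply der_cgk. }
  split.
  { intros x Hx Hn.
    assert (Hx0 : x <> 0) by (intro E; apply Hn; left; lra).
    destruct (Rlt_dec x 0) as [h|h].
    - apply (local_der2 _ (fun x => c0 * (mu * exp (mu * x))) x (x-1) 0); [lra| intros z Hz; cases|].
      eapply der_eq; [apply der_cmuexp|].
      assert (E1 : nfun sg gm RR x = exp (gm / sg * x)) by cases.
      assert (E2 : cfun c0 mu a k RR cB x = c0 * exp (mu * x)) by cases.
      rewrite E1, E2, psi_mid by (apply Hen; lra). rewrite <- Hmumu. ring.
    - apply (local_der2 _ (fun x => c0 * (a * gk k (a * x))) x 0 RR); [lra| intros z Hz; cases|].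
      eapply der_eq; [apply der_cgk|].
      assert (E1 : nfun sg gm RR x = 1) by cases.
      assert (E2 : cfun c0 mu a k RR cB x = c0 * fk k (a * x)) by cases.
      rewrite E1, E2, psi_1, <- Haa. ring. }
  split; [cases|].
  split; [intros x Hx; cases|].
  split.
  { exists c0. intros x Hx. cases.
    - pose proof (Hem x ltac:(lra)). rewrite Rabs_right by nra. nra.
    - rewrite Hcz by lra. rewrite Rabs_right; replace x with 0 by lra; rewrite Rmult_0_r, exp_0; lra. }
  split.
  { intros x Hx. cases.
    - pose proof (exp_pos (mu * x)). assert (0 <= mu * exp (mu * x)) by nra. nra.
    - pose proof (gk_pos k (a * x) ltac:(lra) ltac:(nra)). assert (0 <= a * gk k (a * x)) by nra. nra. }
  set (q1 := fun x => gm / 2 * x ^ 2 + 0 * x + 0).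
  set (q2 := fun x => - gp / 2 * x ^ 2 + (gm * xb + gp * xb) * x + (- gm * xb ^ 2 / 2 - gp * xb ^ 2 / 2)).
  set (l1 := fun x => gm * x + 0).
  set (l2 := fun x => (- gp) * x + (gm * xb + gp * xb)).
  assert (Hdm : 0 < Rmin xb (RR - xb)) by (apply Rmin_pos; lra).
  assert (Hdm1 : Rmin xb (RR - xb) <= xb) by apply Rmin_l.
  assert (Hdm2 : Rmin xb (RR - xb) <= RR - xb) by apply Rmin_r.
  split.
  { intros x Hx. destruct (Req_dec x 0) as [->|h0].
    - apply (junction_cont _ (fun _ => 0) q1 0 xb); [lra| | | apply Hcont_const| apply cont_quad].
      + intros z Hz. unfold q1. cases. apply Hq0; lra.
      + intros z Hz. unfold q1. cases.
    - destruct (Rlt_dec x xb) as [h1|h1].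
      + apply (local_cont2 _ q1 x 0 xb); [lra| intros z Hz; unfold q1; cases| apply cont_quad].
      + destruct (Req_dec x xb) as [->|h2].
        * apply (junction_cont _ q1 q2 xb (Rmin xb (RR - xb))); [lra| | | apply cont_quad| apply cont_quad].
          -- intros z Hz. unfold q1. cases.
          -- intros z Hz. unfold q2. cases. apply Hq12; lra.
        * destruct (Req_dec x RR) as [->|h3].
          -- apply (junction_cont _ q2 (fun _ => 0) RR (RR - xb)); [lra| | | apply cont_quad| apply Hcont_const].
             ++ intros z Hz. unfold q2. cases.
             ++ intros z Hz. unfold q2. cases. apply Hq2; lra.
          -- apply (local_cont2 _ q2 x xb RR); [lra| intros z Hz; unfold q2; cases| apply cont_quad]. }
  split.
  { intros x Hx. destruct (Rlt_dec x xb) as [h1|h1].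
    - apply (local_der2 _ q1 x 0 xb); [lra| intros z Hz; unfold q1; cases|].
      eapply der_eq; [apply der_quad| cases; field].
    - destruct (Req_dec x xb) as [->|h2].
      + apply (junction_der _ q1 q2 xb (Rmin xb (RR - xb))); [lra| | | |].
        * intros z Hz. unfold q1. cases.
        * intros z Hz. unfold q2. cases. apply Hq12; lra.
        * eapply der_eq; [apply der_quad| cases; field].
        * eapply der_eq; [apply der_quad| cases; field].
      + apply (local_der2 _ q2 x xb RR); [lra| intros z Hz; unfold q2; cases|].
        eapply der_eq; [apply der_quad| cases; field]. }
  split.
  { intros x Hx. destruct (Rlt_dec x xb) as [h1|h1].
    - apply (local_cont2 _ l1 x 0 xb); [lra| intros z Hz; unfold l1; cases| apply cont_lin].
    - destruct (Req_dec x xb) as [->|h2].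
      + apply (junction_cont _ l1 l2 xb (Rmin xb (RR - xb))); [lra| | | apply cont_lin| apply cont_lin].
        * intros z Hz. unfold l1. cases.
        * intros z Hz. unfold l2. cases. replace z with xb by lra. ring.
      + apply (local_cont2 _ l2 x xb RR); [lra| intros z Hz; unfold l2; cases| apply cont_lin]. }
  split.
  { intros x Hx Hn.
    assert (Hxx : x <> xb) by (intro E; apply Hn; right; left; lra).
    assert (E2 : cfun c0 mu a k RR cB x = c0 * fk k (a * x)) by cases.
    rewrite E2. destruct (Rlt_dec x xb) as [h1|h1].
    - apply (local_der2 _ l1 x 0 xb); [lra| intros z Hz; unfold l1; cases|].
      eapply der_eq; [apply der_lin|]. rewrite G_lt by (apply Hcl; lra). ring.
    - apply (local_der2 _ l2 x xb RR); [lra| intros z Hz; unfold l2; cases|].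
      eapply der_eq; [apply der_lin|]. rewrite G_gt by (apply Hcg; lra). ring. }
  split; [cases; field|].
  split; [cases; apply Hq2; lra|].
  split; [intros x Hx; cases|].
  split.
  { assert (E : dpfun gp gm xb RR = - sg) by (cases; rewrite Hsg; ring).
    rewrite <- E. apply cont_lim.
    apply (local_cont2 _ l2 RR xb (RR+1)); [lra| intros z Hz; unfold l2; cases| apply cont_lin]. }
  split; [cases; apply Hnz; lra|].
  { assert (E : dpfun gp gm xb 0 = 0) by (cases; ring).
    rewrite <- E at 1. apply cont_lim.
    apply (local_cont2 _ l1 0 (-1) xb); [lra| intros z Hz; unfold l1; cases| apply cont_lin]. }
Qed.

Lemma K_pos gp gm : 0 < gp -> 0 < gm -> 0 < sqrt ((gp + gm) * gm) - gm.
Proof.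
  intros. assert (sqrt (gm * gm) < sqrt ((gp + gm) * gm)) by (apply sqrt_lt_1; nra).
  rewrite sqrt_square in H1 by lra. lra.
Qed.

Lemma root_unique lam nc gp gm cbar cB R R' :
  0 < lam -> 0 < nc -> nc < 1 -> 0 < gp -> 0 < gm -> 0 < cbar -> cbar < cB ->
  0 < R -> 0 < R' -> F lam nc gp gm cbar cB R = 0 -> F lam nc gp gm cbar cB R' = 0 -> R = R'.
Proof.
  intros Hlam Hnc Hnc1 Hgp Hgm Hcb HcB HR HR' E E'.
  rewrite F_eq in E, E'.
  set (a := sqrt lam) in *. set (k := sqrt nc) in *. set (r := cbar / cB) in *.
  assert (Ha : 0 < a) by (apply sqrt_lt_R0; lra).
  assert (Hk : 0 < k < 1) by (split; [apply sqrt_lt_R0; lra| rewrite <- sqrt_1; apply sqrt_lt_1; lra]).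
  assert (Hr : 0 < r) by (apply Rdiv_lt_0_compat; lra).
  pose proof (alpha_bounds gp gm Hgp Hgm) as Hal.
  assert (E1 : fk k (a * (1 - alpha gp gm) * R) = r * fk k (a * R)) by lra.
  assert (E2 : fk k (a * (1 - alpha gp gm) * R') = r * fk k (a * R')) by lra.
  set (b := a * (1 - alpha gp gm)) in *.
  assert (Hb : 0 < b < a) by (unfold b; split; nra).
  pose proof (fk_pos k (a*R) ltac:(lra) ltac:(nra)). pose proof (fk_pos k (a*R') ltac:(lra) ltac:(nra)).
  assert (0 < fk k (a*R) * fk k (a*R')) by (apply Rmult_lt_0_compat; lra).
  destruct (Rtotal_order R R') as [h|[h|h]]; auto; exfalso.
  - pose proof (H_mono k a b R R' Hk Hb ltac:(lra)). rewrite E1, E2 in H2. nra.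
  - pose proof (H_mono k a b R' R Hk Hb ltac:(lra)). rewrite E1, E2 in H2. nra.
Qed.

Theorem theorem3p2 (lam nc gp gm cbar cB : R) :
  0 < lam -> 0 < nc -> nc < 1 -> 0 < gp -> 0 < gm ->
  0 < cbar -> cbar < cB ->
  (exists! Rr, 0 < Rr /\ F lam nc gp gm cbar cB Rr = 0) /\
  (exists sigma Rr,
      0 < sigma /\ 0 < Rr /\
      admits_monotone_TW lam nc gp gm cbar cB sigma Rr /\
      F lam nc gp gm cbar cB Rr = 0 /\
      sigma = Rr * (sqrt ((gp + gm) * gm) - gm) /\
      (forall sigma' Rr', 0 < sigma' -> 0 < Rr' ->
          admits_monotone_TW lam nc gp gm cbar cB sigma' Rr' ->
          sigma' = sigma /\ Rr' = Rr)) /\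
  (forall cB' sigma Rr sigma' Rr', cB < cB' ->
      0 < sigma -> 0 < Rr -> admits_monotone_TW lam nc gp gm cbar cB sigma Rr ->
      0 < sigma' -> 0 < Rr' -> admits_monotone_TW lam nc gp gm cbar cB' sigma' Rr' ->
      sigma < sigma') /\
  (forall cbar' sigma Rr sigma' Rr', cbar < cbar' -> cbar' < cB ->
      0 < sigma -> 0 < Rr -> admits_monotone_TW lam nc gp gm cbar cB sigma Rr ->
      0 < sigma' -> 0 < Rr' -> admits_monotone_TW lam nc gp gm cbar' cB sigma' Rr' ->
      sigma' < sigma).
Proof.
  intros Hlam Hnc Hnc1 Hgp Hgm Hcb HcB.
  pose proof (K_pos gp gm Hgp Hgm) as HK.
  destruct (root_exists lam nc gp gm cbar cB Hlam Hnc Hnc1 Hgp Hgm Hcb HcB) as [Rz [HR0 HF0]].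
  split; [|split; [|split]].
  - exists Rz. split; [auto|]. intros R' [HR' HF']. apply (root_unique lam nc gp gm cbar cB Rz R'); auto.
  - destruct (existence lam nc gp gm cbar cB Rz Hlam Hnc Hnc1 Hgp Hgm Hcb HcB HR0 HF0) as [Hs Hadm].
    exists (Rz * (sqrt ((gp + gm) * gm) - gm)), Rz.
    split; [auto| split; [auto| split; [auto| split; [auto| split; [auto|]]]]].
    intros s' R' Hs' HR' [n [c [p Hsol]]].
    destruct (sol_props lam nc gp gm cbar cB s' R' n c p Hlam Hnc Hnc1 Hgp Hgm Hcb HcB Hs' HR' Hsol) as [HF' Hsig'].
    assert (R' = Rz) by (apply (root_unique lam nc gp gm cbar cB R' Rz); auto).
    subst R'. split; auto.
  - intros cB' s R s' R' Hc Hs HR [n [c [p Hsol]]] Hs' HR' [n' [c' [p' Hsol']]].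
    destruct (sol_props lam nc gp gm cbar cB s R n c p Hlam Hnc Hnc1 Hgp Hgm Hcb HcB Hs HR Hsol) as [HF Hsig].
    destruct (sol_props lam nc gp gm cbar cB' s' R' n' c' p' Hlam Hnc Hnc1 Hgp Hgm Hcb ltac:(lra) Hs' HR' Hsol') as [HF' Hsig'].
    rewrite F_eq in HF, HF'.
    assert (R < R').
    { apply (root_cmp lam nc gp gm (cbar / cB) (cbar / cB') R R'); auto; try lra.
      split; [apply Rdiv_lt_0_compat; lra|].
      unfold Rdiv. apply Rmult_lt_compat_l; [lra|]. apply Rinv_lt_contravar; nra. }
    rewrite Hsig, Hsig'. nra.
  - intros cb' s R s' R' Hc Hc' Hs HR [n [c [p Hsol]]] Hs' HR' [n' [c' [p' Hsol']]].
    destruct (sol_props lam nc gp gm cbar cB s R n c p Hlam Hnc Hnc1 Hgp Hgm Hcb HcB Hs HR Hsol) as [HF Hsig].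
    destruct (sol_props lam nc gp gm cb' cB s' R' n' c' p' Hlam Hnc Hnc1 Hgp Hgm ltac:(lra) Hc' Hs' HR' Hsol') as [HF' Hsig'].
    rewrite F_eq in HF, HF'.
    assert (R' < R).
    { apply (root_cmp lam nc gp gm (cb' / cB) (cbar / cB) R' R); auto; try lra.
      split; [apply Rdiv_lt_0_compat; lra|].
      unfold Rdiv. apply Rmult_lt_compat_r; [apply Rinv_0_lt_compat; lra| lra]. }
    rewrite Hsig, Hsig'. nra.
Qed.
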